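(* Let $f:A\to B$ be a strict morphism in $\mathcal G$ (so $\ker f$ and $\operatorname{coker} f$ lie in $\mathcal G$). Then: (1) if $g:X\to A$ is a strict morphism with $f\circ g=0$, the induced map $\tilde g:X\to\ker f$ is a strict morphism; (2) if $h:B\to Y$ is a strict morphism with $h\circ f=0$, the induced map $\bar h:\operatorname{coker} f\to Y$ is a strict morphism. Consequently $\ker f$ and $\operatorname{coker} f$ are also a kernel and cokernel of $f$ in the category whose objects are those of $\mathcal G$ and whose morphisms are the strict morphisms.
   Context: Let $\Lambda$ be a finite dimensional algebra over a field and $\mathrm{mod}\text-\Lambda$ the category of finitely generated right $\Lambda$-modules. Fix a torsion class $\mathcal G\subseteq\mathrm{mod}\text-\Lambda$, i.e. a class of modules closed under isomorphisms, extensions and quotients. For $B\in\mathcal G$, a subobject of $B$ is a submodule of $B$ that lies in $\mathcal G$. A subobject $A\subseteq B$ is a strict subobject if $A\cap B'\in\mathcal G$ for every subobject $B'$ of $B$. A strict morphism is a module homomorphism $f:A\to B$ with $A,B\in\mathcal G$ such that $\ker f\in\mathcal G$, $\ker f$ is a strict subobject of $A$, and $\operatorname{im} f$ is a strict subobject of $B$. *)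

(* Defs.v *)
From HB Require Import structures.
From mathcomp Require Import all_boot all_order all_algebra falgebra.
Set Implicit Arguments.
Unset Strict Implicit.
Unset Printing Implicit Defensive.
Import GRing.Theory.
Local Open Scope ring_scope.

(* A finitely generated right module over a finite dimensional K-algebra L:
   a finite dimensional K-vector space with a right L-action. *)
Record rmod (K : fieldType) (L : falgType K) := RMod {
  rm_sort :> vectType K;
  rm_act : rm_sort -> L -> rm_sort;
  rm_actDl : forall (u v : rm_sort) a, rm_act (u + v) a = rm_act u a + rm_act v a;
  rm_actZl : forall (k : K) (u : rm_sort) a, rm_act (k *: u) a = k *: rm_act u a;
  rm_actDr : forall (u : rm_sort) a b, rm_act u (a + b) = rm_act u a + rm_act u b;
  rm_actZr : forall (k : K) (u : rm_sort) a, rm_act u (k *: a) = k *: rm_act u a;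
  rm_act1 : forall u : rm_sort, rm_act u 1 = u;
  rm_actM : forall (u : rm_sort) a b, rm_act u (a * b) = rm_act (rm_act u a) b
}.

Section Defs.
Variables (K : fieldType) (L : falgType K).
Local Notation rmod := (rmod L).

Definition is_hom (M N : rmod) (f : 'Hom(M, N)) : Prop :=
  forall (u : M) (a : L), f (rm_act u a) = rm_act (f u) a.

Definition is_submod (M : rmod) (U : {vspace M}) : Prop :=
  forall (u : M) (a : L), u \in U -> rm_act u a \in U.

Definition torsion_class (G : rmod -> Prop) : Prop :=
  [/\ (forall (M N : rmod) (f : 'Hom(M, N)), is_hom f ->
         lker f = 0%VS -> limg f = fullv -> G M -> G N),
      (forall (M1 M M2 : rmod) (i : 'Hom(M1, M)) (p : 'Hom(M, M2)),
         is_hom i -> is_hom p -> lker i = 0%VS -> limg p = fullv ->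
         limg i = lker p -> G M1 -> G M2 -> G M) &
      (forall (M N : rmod) (f : 'Hom(M, N)), is_hom f ->
         limg f = fullv -> G M -> G N)].

(* A submodule U of M, regarded as a module, lies in G.  Since G is closed
   under isomorphism, this means: U is the image of an injective module map
   from some module in G. *)
Definition sub_in (G : rmod -> Prop) (M : rmod) (U : {vspace M}) : Prop :=
  is_submod U /\
  exists (N : rmod) (i : 'Hom(N, M)),
    [/\ G N, is_hom i, lker i = 0%VS & limg i = U].

Definition subobject (G : rmod -> Prop) (B : rmod) (U : {vspace B}) : Prop :=
  sub_in G U.

Definition strict_subobject (G : rmod -> Prop) (B : rmod) (U : {vspace B}) : Prop :=
  subobject G U /\
  forall U' : {vspace B}, subobject G U' -> sub_in G (U :&: U')%VS.

Definition strict_morphism (G : rmod -> Prop) (A B : rmod) (f : 'Hom(A, B)) : Prop :=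
  [/\ is_hom f, G A, G B, sub_in G (lker f)
      & strict_subobject G (lker f) /\ strict_subobject G (limg f)].

End Defs.

(* Main.v *)
Require Import Defs.
From HB Require Import structures.
From mathcomp Require Import all_boot all_order all_algebra falgebra.
Set Implicit Arguments.
Unset Strict Implicit.
Unset Printing Implicit Defensive.
Import GRing.Theory.
Local Open Scope ring_scope.

Section Aux.
Variables (K : fieldType) (L : falgType K).

Section SubModDef.
Variables (M : rmod L) (U : {vspace M}) (hU : is_submod U).
Definition sm_act (u : subvs_of U) (a : L) : subvs_of U :=
  vsproj U (rm_act (vsval u) a).
Lemma sm_actDl (u v : subvs_of U) a : sm_act (u + v) a = sm_act u a + sm_act v a.
Proof. by rewrite /sm_act linearD /= rm_actDl linearD. Qed.
Lemma sm_actZl (k : K) (u : subvs_of U) a : sm_act (k *: u) a = k *: sm_act u a.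
Proof. by rewrite /sm_act linearZ /= rm_actZl linearZ. Qed.
Lemma sm_actDr (u : subvs_of U) a b : sm_act u (a + b) = sm_act u a + sm_act u b.
Proof. by rewrite /sm_act rm_actDr linearD. Qed.
Lemma sm_actZr (k : K) (u : subvs_of U) a : sm_act u (k *: a) = k *: sm_act u a.
Proof. by rewrite /sm_act rm_actZr linearZ. Qed.
Lemma sm_act1 (u : subvs_of U) : sm_act u 1 = u.
Proof. by rewrite /sm_act rm_act1 vsvalK. Qed.
Lemma sm_actM (u : subvs_of U) a b : sm_act u (a * b) = sm_act (sm_act u a) b.
Proof. by rewrite /sm_act rm_actM vsprojK // hU // subvsP. Qed.
Definition SubMod : rmod L :=
  @RMod K L (subvs_of U) sm_act sm_actDl sm_actZl sm_actDr sm_actZr sm_act1 sm_actM.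
End SubModDef.


Definition fromSub (M : rmod L) (U : {vspace M}) (hU : is_submod U) :
  'Hom(SubMod hU, M) := linfun (vsval : subvs_of U -> M).
Definition toSub (N M : rmod L) (V : {vspace M}) (hV : is_submod V)
  (k : 'Hom(N, M)) : 'Hom(N, SubMod hV) :=
  (linfun (vsproj V : M -> subvs_of V) \o k)%VF.

Lemma fromSubE (M : rmod L) (U : {vspace M}) (hU : is_submod U) x :
  fromSub hU x = vsval x.
Proof. by rewrite lfunE. Qed.

Lemma toSubE (N M : rmod L) (V : {vspace M}) (hV : is_submod V) (k : 'Hom(N, M)) x :
  k x \in V -> vsval (toSub hV k x) = k x.
Proof. by move=> kx; rewrite comp_lfunE lfunE /= vsprojK. Qed.

Lemma hom_fromSub (M : rmod L) (U : {vspace M}) (hU : is_submod U) :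
  is_hom (fromSub hU).
Proof. by move=> u a; rewrite !fromSubE /= /sm_act vsprojK // hU // subvsP. Qed.

Lemma hom_toSub (N M : rmod L) (V : {vspace M}) (hV : is_submod V) (k : 'Hom(N, M)) :
  is_hom k -> (forall x, k x \in V) -> is_hom (toSub hV k).
Proof.
move=> hk kV u a; apply: subvs_inj; rewrite toSubE // /= /sm_act vsprojK.
  by rewrite toSubE // hk.
by rewrite toSubE //; apply: hV.
Qed.


Section GLemmas.
Variables (G : rmod L -> Prop) (tc : torsion_class G).

Lemma G_sub (M : rmod L) (U : {vspace M}) (hU : is_submod U) :
  sub_in G U -> G (SubMod hU).
Proof.
case: tc => iso _ _ [_ [N [i [GN hi ki ii]]]].
have iU x : i x \in U by rewrite -ii memv_img ?memvf.
apply: (iso _ _ (toSub hU i)) GN.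
- exact: hom_toSub.
- have iinj : injective i by apply/lker0P/eqP.
  apply/eqP/lker0P => x y e; apply: iinj.
  by rewrite -(toSubE hU (iU x)) e toSubE.
- apply/vspaceP => y; rewrite memvf.
  have : vsval y \in limg i by rewrite ii subvsP.
  case/memv_imgP => x _ ex; apply/memv_imgP; exists x; rewrite ?memvf //.
  by apply: subvs_inj; rewrite toSubE.
Qed.

Lemma sub_G (M : rmod L) (U : {vspace M}) (hU : is_submod U) :
  G (SubMod hU) -> sub_in G U.
Proof.
move=> GS; split=> //; exists (SubMod hU), (fromSub hU); split=> //.
- exact: hom_fromSub.
- by apply/eqP/lker0P => x y; rewrite !fromSubE; apply: subvs_inj.
- apply/vspaceP => y; apply/memv_imgP/idP => [[x _ ->]|yU].
    by rewrite fromSubE subvsP.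
  by exists (vsproj U y); rewrite ?memvf // fromSubE vsprojK.
Qed.

Lemma sub_full (M : rmod L) : G M -> sub_in G (fullv : {vspace M}).
Proof.
move=> GM; split; first by move=> *; apply: memvf.
exists M, \1%VF; split=> //.
- by move=> u a; rewrite !id_lfunE.
- by apply/eqP/lker0P => x y; rewrite !id_lfunE.
- exact: lim1g.
Qed.

Lemma sub_img (M N : rmod L) (U : {vspace M}) (h : 'Hom(M, N)) :
  sub_in G U -> (forall u a, u \in U -> h (rm_act u a) = rm_act (h u) a) ->
  sub_in G (h @: U)%VS.
Proof.
move=> sU hh; have hU : is_submod U by case: sU.
have hV : is_submod (h @: U)%VS.
  by move=> y a /memv_imgP [u uU ->]; rewrite -hh // memv_img // hU.
apply: (@sub_G _ _ hV); case: tc => _ _ quo.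
apply: (quo _ _ (toSub hV (h \o fromSub hU)%VF)); last exact: G_sub.
- apply: hom_toSub => [x a|x]; rewrite !comp_lfunE !fromSubE.
    by rewrite /= /sm_act vsprojK ?hh ?subvsP // hU // subvsP.
  by rewrite memv_img ?subvsP.
- apply/vspaceP => y; rewrite memvf; have := subvsP y.
  case/memv_imgP => u uU ey; apply/memv_imgP; exists (vsproj U u); rewrite ?memvf //.
  by apply: subvs_inj; rewrite toSubE comp_lfunE fromSubE ?vsprojK // memv_img ?subvsP.
Qed.

Lemma act0 (M : rmod L) a : rm_act (0 : M) a = 0.
Proof. by rewrite -(scale0r (0 : M)) rm_actZl !scale0r. Qed.

Lemma sub_preim_inj (N M : rmod L) (i : 'Hom(N, M)) (V : {vspace M}) :
  is_hom i -> lker i = 0%VS -> sub_in G V -> (V <= limg i)%VS ->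
  sub_in G (i @^-1: V)%VS.
Proof.
move=> hi ki [hV [N0 [j [GN0 hj kj ij]]]] Vi.
have iK := lker0_lfunK (introT eqP ki).
have iVK := @limg_lfunVK _ _ _ i.
have jV x : j x \in V by rewrite -ij memv_img ?memvf.
have jI x : j x \in limg i by apply: (subvP Vi).
have jinj : injective j by apply/lker0P/eqP.
split.
  by move=> x a; rewrite -!memv_preim hi => ix; apply: hV.
exists N0, (i^-1 \o j)%VF; split=> //.
- move=> x a; rewrite !comp_lfunE hj.
  have := jI x; case/memv_imgP => n _ ->.
  by rewrite -hi !iK.
- apply/eqP/lker0P => x y; rewrite !comp_lfunE => e; apply: jinj.
  by rewrite -(iVK _ (jI x)) e iVK.
- apply/vspaceP => y; rewrite -memv_preim; apply/memv_imgP/idP => [[x _ ->]|iy].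
    by rewrite comp_lfunE iVK ?jI // jV.
  rewrite -ij in iy; case/memv_imgP: iy => x _ e.
  by exists x; rewrite ?memvf // comp_lfunE -e iK.
Qed.

Lemma sub_ext (M N : rmod L) (p : 'Hom(M, N)) (U' : {vspace N}) :
  is_hom p -> limg p = fullv -> sub_in G (lker p) -> sub_in G U' ->
  sub_in G (p @^-1: U')%VS.
Proof.
move=> hp ip sK sU'.
have hK : is_submod (lker p) by case: sK.
have hU' : is_submod U' by case: sU'.
have hW : is_submod (p @^-1: U')%VS.
  by move=> x a; rewrite -!memv_preim hp => px; apply: hU'.
apply: (@sub_G _ _ hW); case: tc => _ ext _.
have iW x : fromSub hK x \in (p @^-1: U')%VS.
  rewrite fromSubE -memv_preim; have := subvsP x; rewrite memv_ker => /eqP->.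
  exact: mem0v.
have pU x : (p \o fromSub hW)%VF x \in U'.
  by rewrite comp_lfunE fromSubE memv_preim subvsP.
apply: (ext (SubMod hK) _ (SubMod hU') (toSub hW (fromSub hK))
             (toSub hU' (p \o fromSub hW)%VF)).
- by apply: hom_toSub; [exact: hom_fromSub | exact: iW].
- apply: hom_toSub; last exact: pU; move=> x a.
  by rewrite !comp_lfunE hom_fromSub hp.
- apply/eqP/lker0P => x y e; apply: subvs_inj.
  by rewrite -!fromSubE -(toSubE hW (iW x)) e toSubE.
- apply/vspaceP => y; rewrite memvf.
  have : vsval y \in limg p by rewrite ip memvf.
  case/memv_imgP => m _ e.
  have mW : m \in (p @^-1: U')%VS by rewrite -memv_preim -e subvsP.
  apply/memv_imgP; exists (vsproj _ m); rewrite ?memvf //.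
  by apply: subvs_inj; rewrite toSubE // comp_lfunE fromSubE vsprojK.
- apply/vspaceP => z; transitivity (vsval z \in lker p).
    apply/memv_imgP/idP => [[x _ ->]|zk].
      by rewrite toSubE // fromSubE subvsP.
    exists (vsproj (lker p) (vsval z)); rewrite ?memvf //.
    by apply: subvs_inj; rewrite toSubE // fromSubE vsprojK.
  rewrite !memv_ker; apply/eqP/eqP => e.
    by apply: subvs_inj; rewrite toSubE // comp_lfunE fromSubE e linear0.
  by have := toSubE hU' (pU z); rewrite e comp_lfunE fromSubE => <-; rewrite linear0.
- exact: G_sub.
- exact: G_sub.
Qed.

Lemma sub_zero (M N : rmod L) : G M -> sub_in G (0 : {vspace N})%VS.
Proof.
move=> GM; have -> : (0 : {vspace N})%VS = ((0 : 'Hom(M, N)) @: fullv)%VS.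
  apply/vspaceP => y; rewrite memv0; apply/eqP/memv_imgP => [->|[x _ ->]].
    by exists 0; rewrite ?memvf // zero_lfunE.
  by rewrite zero_lfunE.
apply: sub_img; first exact: sub_full.
by move=> u a _; rewrite !zero_lfunE act0.
Qed.

Lemma G_of_full (M : rmod L) : sub_in G (fullv : {vspace M}) -> G M.
Proof.
case=> _ [N0 [j [GN0 hj _ ij]]]; case: tc => _ _ quo; exact: (quo _ _ j).
Qed.

End GLemmas.
End Aux.

Theorem mainTheorem6 (K : fieldType) (L : falgType K) (G : rmod L -> Prop) :
  torsion_class G ->
  forall (A B : rmod L) (f : 'Hom(A, B)), strict_morphism G f ->
  (* kernel: any realization (Nk, i) of ker f *)
  (forall (Nk : rmod L) (i : 'Hom(Nk, A)), is_hom i -> lker i = 0%VS ->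
     limg i = lker f ->
     strict_morphism G i /\
     forall (X : rmod L) (g : 'Hom(X, A)), strict_morphism G g ->
       (f \o g = 0)%VF ->
       (exists gt : 'Hom(X, Nk), is_hom gt /\ (i \o gt = g)%VF) /\
       (forall gt : 'Hom(X, Nk), is_hom gt -> (i \o gt = g)%VF ->
          strict_morphism G gt)) /\
  (* cokernel: any realization (Nc, p) of coker f *)
  (forall (Nc : rmod L) (p : 'Hom(B, Nc)), is_hom p -> limg p = fullv ->
     lker p = limg f ->
     G Nc /\ strict_morphism G p /\
     forall (Y : rmod L) (h : 'Hom(B, Y)), strict_morphism G h ->
       (h \o f = 0)%VF ->
       (exists hb : 'Hom(Nc, Y), is_hom hb /\ (hb \o p = h)%VF) /\
       (forall hb : 'Hom(Nc, Y), is_hom hb -> (hb \o p = h)%VF ->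
          strict_morphism G hb)).
Proof.
move=> tc A B f [hf GA GB skf [sskf ssif]]; split.
- move=> Nk i hi ki ii.
  have iK := lker0_lfunK (introT eqP ki).
  have iVK := @limg_lfunVK _ _ _ i.
  have iinj : injective i by apply/lker0P/eqP.
  have GNk : G Nk.
    apply: (G_of_full tc).
    have -> : (fullv : {vspace Nk}) = (i @^-1: limg i)%VS.
      by apply/vspaceP => y; rewrite -memv_preim memvf memv_img ?memvf.
    apply: sub_preim_inj => //; first by rewrite ii.
  split.
    split=> //; first by rewrite ki; exact: (sub_zero tc _ GA).
    split; last by rewrite ii.
    split; first by rewrite ki; exact: (sub_zero tc _ GA).
    by move=> U' _; rewrite ki cap0v; exact: (sub_zero tc _ GA).
  move=> X g [hg GX _ skg [sskg ssig]] fg0.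
  have gI x : g x \in limg i.
    by rewrite ii memv_ker -comp_lfunE fg0 zero_lfunE.
  split.
    exists (i^-1 \o g)%VF; split.
      move=> x a; apply: iinj; rewrite hi !comp_lfunE !iVK ?gI //.
    by apply/lfunP => x; rewrite !comp_lfunE iVK ?gI.
  move=> gt hgt e.
  have gtE x : i (gt x) = g x by rewrite -e comp_lfunE.
  have kgt : lker gt = lker g.
    apply/vspaceP => x; rewrite !memv_ker -gtE; apply/eqP/eqP => [->|h0].
      by rewrite linear0.
    by apply: iinj; rewrite h0 linear0.
  have igt : limg gt = (i @^-1: limg g)%VS.
    apply/vspaceP => y; rewrite -memv_preim.
    apply/memv_imgP/memv_imgP => [[x _ ->]|[x _ e']].
      by exists x; rewrite ?memvf ?gtE.
    by exists x; rewrite ?memvf //; apply: iinj; rewrite gtE.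
  have gsub : (limg g <= limg i)%VS.
    by apply/subvP => y /memv_imgP [x _ ->]; exact: gI.
  split=> //; rewrite ?kgt //; split=> //; rewrite igt; split.
    by apply: sub_preim_inj => //; case: ssig.
  move=> U' sU'.
  have -> : (i @^-1: limg g :&: U' = i @^-1: (limg g :&: i @: U'))%VS.
    apply/vspaceP => y; rewrite memv_cap -!memv_preim memv_cap.
    congr (_ && _); apply/idP/memv_imgP => [yU|[x xU /iinj ->//]].
    by exists y.
  apply: sub_preim_inj => //.
    by apply: ssig.2; apply: sub_img => //.
  exact: subv_trans (capvSl _ _) gsub.
- move=> Nc p hp ip kp.
  have pVK v : p ((p^-1)%VF v) = v.
    by apply: limg_lfunVK; rewrite ip memvf.
  have GNc : G Nc by case: tc => _ _ quo; exact: (quo _ _ p).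
  have sK : sub_in G (lker p) by rewrite kp; case: ssif.
  split=> //; split.
    split=> //; split; first by rewrite kp.
    rewrite ip; split; first exact: sub_full.
    by move=> U' sU'; rewrite capfv.
  move=> Y h [hh _ GY skh [sskh ssih]] hf0.
  have fh x : h (f x) = 0 by rewrite -comp_lfunE hf0 zero_lfunE.
  have hpp b : h ((p^-1)%VF (p b)) = h b.
    have : (p^-1)%VF (p b) - b \in lker p by rewrite memv_ker linearB /= pVK subrr.
    rewrite kp => /memv_imgP [x _ e].
    by apply/eqP; rewrite -subr_eq0 -linearB /= e fh.
  split.
    exists (h \o p^-1)%VF; split.
      move=> v a; rewrite !comp_lfunE -{1}(pVK v) -hp hpp hh.
      by [].
    by apply/lfunP => b; rewrite !comp_lfunE hpp.
  move=> hb hhb e.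
  have hbE b : hb (p b) = h b by rewrite -e comp_lfunE.
  have psurj v : exists b, v = p b by exists ((p^-1)%VF v); rewrite pVK.
  have khb : lker hb = (p @: lker h)%VS.
    apply/vspaceP => v; apply/idP/memv_imgP => [|[b bk ->]].
      by case: (psurj v) => b ->; rewrite memv_ker hbE => hb0; exists b; rewrite ?memv_ker.
    by rewrite memv_ker hbE -memv_ker.
  have ihb : limg hb = limg h.
    apply/vspaceP => y; apply/memv_imgP/memv_imgP => [[v _ ->]|[b _ ->]].
      by case: (psurj v) => b ->; exists b; rewrite ?memvf ?hbE.
    by exists (p b); rewrite ?memvf ?hbE.
  have skhb : sub_in G (lker hb).
    by rewrite khb; apply: sub_img => //; move=> u a _; exact: hp.
  split=> //; split; last by rewrite ihb.
  split=> // U' sU'; rewrite khb.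
  have sW : sub_in G (p @^-1: U')%VS by exact: sub_ext.
  have := sskh.2 _ sW.
  have -> : (p @: lker h :&: U' = p @: (lker h :&: p @^-1: U'))%VS.
    apply/vspaceP => y; apply/memv_capP/memv_imgP =>
      [[/memv_imgP [b bk ->] pU]|[b /memv_capP [bk bW] ->]].
      by exists b => //; rewrite memv_cap bk -memv_preim pU.
    by split; [apply: memv_img | rewrite memv_preim].
  by move=> s; apply: sub_img => // u a _; exact: hp.
Qed.
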